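(* Let $G$ be a finite graph, let $(C,D)$ be an ordered partition of $V(G)$, let $c_0\in C$ and $d_0\in D$, and let $(V_1,\dots,V_k)$ be a $D$-twin partition of $C$. Then \[\mathrm{dist}_G(c_0,d_0)=\min_{i\in[k]}\bigl(\mathrm{dist}_G(c_0,V_i)+\mathrm{dist}_{G[V_i\cup D]}(V_i,d_0)\bigr).\]
   Context: An ordered partition of a set is a finite sequence of pairwise disjoint (possibly empty) subsets whose union is the set. For a partition $\{C,D\}$ of $V(G)$, a $D$-twin partition of $C$ is a partition $(V_1,\dots,V_k)$ of $C$ (parts may be empty) such that for each $i$ and all $u,v\in V_i$, $N_G(u)\cap D=N_G(v)\cap D$. $\mathrm{dist}_G$ is shortest-path distance ($\infty$ if no path); for sets, $\mathrm{dist}_G(U,x)=\min_{u\in U}\mathrm{dist}_G(u,x)$ with $\min\emptyset=\infty$. $G[W]$ denotes the induced subgraph. *)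

(* Defs.v *)
(* Finite simple graph = symmetric irreflexive relation on a finType. *)
From mathcomp Require Import all_boot.
From Stdlib Require Import ClassicalEpsilon.
Set Implicit Arguments. Unset Strict Implicit. Unset Printing Implicit Defensive.

Section Dist.
Variables (T : finType) (e : rel T).

(* a walk of length n from u to v all of whose vertices lie in W
   (i.e. a walk in the induced subgraph G[W]) *)
Definition walkb (W : {set T}) (u v : T) (n : nat) : bool :=
  [exists p : n.-tuple T,
     [&& u \in W, all (fun x => x \in W) p, path e u p & last u p == v]].

(* extended naturals: None = infinity *)
Definition omin (a b : option nat) : option nat :=
  match a, b with
  | None, _ => b
  | _, None => a
  | Some x, Some y => Some (minn x y)
  end.

Definition oadd (a b : option nat) : option nat :=
  match a, b with
  | Some x, Some y => Some (x + y)
  | _, _ => None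
  end.

Definition dist (W : {set T}) (u v : T) : option nat :=
  match excluded_middle_informative (exists n, walkb W u v n) with
  | left H => Some (ex_minn H)
  | right _ => None
  end.

(* dist_{G[W]}(U, x) = min_{u in U} dist_{G[W]}(u, x), min over empty = infinity *)
Definition dist_set (W U : {set T}) (x : T) : option nat :=
  \big[omin/None]_(u in U) dist W u x.

Definition nbhd (u : T) : {set T} := [set w | e u w].

End Dist.

(* Main.v *)
Require Import Defs.
From mathcomp Require Import all_boot.
From Stdlib Require Import ClassicalEpsilon.
Set Implicit Arguments. Unset Strict Implicit. Unset Printing Implicit Defensive.

Definition le_n (a : option nat) (n : nat) : bool :=
  if a is Some x then x <= n else false.

Lemma oeq a b : (forall n, le_n a n = le_n b n) -> a = b.
Proof.
case: a => [x|]; case: b => [y|] //= H.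
- have h1 := H x; have h2 := H y; rewrite leqnn /= in h1 h2.
  by apply/f_equal/eqP; rewrite eqn_leq -h1 h2 leqnn.
- by have := H x; rewrite leqnn.
- by have := H y; rewrite leqnn.
Qed.

Lemma le_n_omin a b n : le_n (omin a b) n = le_n a n || le_n b n.
Proof. by case: a => [x|]; case: b => [y|] //=; rewrite ?orbF // geq_min. Qed.

Lemma le_n_big (I : finType) (P : pred I) (F : I -> option nat) n :
  le_n (\big[omin/None]_(i | P i) F i) n = [exists (i | P i), le_n (F i) n].
Proof.
rewrite (big_morph (fun a => le_n a n) (id1 := false) (op1 := orb)) //.
  by rewrite big_orE.
by move=> a b; rewrite le_n_omin.
Qed.

Lemma le_n_oadd a b n : le_n (oadd a b) n <->
  exists x y, [/\ le_n a x, le_n b y & x + y <= n].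
Proof.
case: a => [x|]; case: b => [y|] /=; split => //.
- by move=> h; exists x, y.
- by case=> [x' [y' [h1 h2 h3]]]; apply: leq_trans h3; apply: leq_add.
- by case=> [x' [y' [h1 h2 h3]]].
- by case=> [x' [y' [h1 h2 h3]]].
- by case=> [x' [y' [h1 h2 h3]]].
Qed.

Section G.
Variables (T : finType) (e : rel T).

Lemma le_n_dist W u v n :
  le_n (dist e W u v) n <-> exists m, m <= n /\ walkb e W u v m.
Proof.
rewrite /dist; case: excluded_middle_informative => [H|H] /=.
- case: ex_minnP => m Hm Hmin; split.
    by move=> h; exists m.
  by case=> m' [h1 h2]; apply: leq_trans (Hmin _ h2) h1.
- split => //; case=> m [_ h]; case: H; by exists m.
Qed.

Lemma walkbP (W : {set T}) u v n :
  reflect (exists p : seq T, [/\ size p = n, u \in W, all (fun x => x \in W) p,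
              path e u p & last u p = v]) (walkb e W u v n).
Proof.
apply: (iffP existsP).
- case=> p /and4P [h1 h2 h3 /eqP h4]; exists (val p); split => //.
  exact: size_tuple.
- case=> p [h1 h2 h3 h4 h5]; exists (tcast h1 (in_tuple p)).
  by rewrite val_tcast /= h2 h3 h4 h5 eqxx.
Qed.
End G.
Section W.
Variables (T : finType) (e : rel T) (e_sym : symmetric e).

Lemma walk_rev (W : {set T}) u v n : walkb e W u v n -> walkb e W v u n.
Proof.
move/walkbP=> [p [h1 h2 h3 h4 h5]]; apply/walkbP.
exists (rev (belast u p)); split.
- by rewrite size_rev size_belast.
- have : last u p \in u :: p by exact: mem_last.
  by rewrite h5 inE => /orP [/eqP->|/(allP h3)].
- rewrite all_rev; apply/allP => x /mem_belast; rewrite inE => /orP [/eqP->//|].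
  exact: (allP h3).
- rewrite -h5 rev_path; suff -> : path (fun z => e^~ z) u p = path e u p by []. 
  by apply: eq_path => x y /=; exact: e_sym.
- move: h5; clear h1 h3 h4; case: p => [|x p] /= h5; first by rewrite h5.
  by rewrite rev_cons last_rcons.
Qed.

Lemma walk_cat (W : {set T}) u v w a b :
  walkb e W u v a -> walkb e W v w b -> walkb e W u w (a + b).
Proof.
move/walkbP=> [p [h1 h2 h3 h4 h5]] /walkbP [q [g1 g2 g3 g4 g5]].
apply/walkbP; exists (p ++ q); split => //.
- by rewrite size_cat h1 g1.
- by rewrite all_cat h3 g3.
- by rewrite cat_path h4 h5 g4.
- by rewrite last_cat h5 g5.
Qed.

Lemma walk_mono (W W' : {set T}) u v n : W \subset W' ->
  walkb e W u v n -> walkb e W' u v n.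
Proof.
move=> /subsetP sW /walkbP [p [h1 h2 h3 h4 h5]]; apply/walkbP; exists p; split => //.
- exact: sW.
- by apply: sub_all h3 => x /sW.
Qed.

Lemma walk_edge (W : {set T}) u v : u \in W -> v \in W -> e u v -> walkb e W u v 1.
Proof.
by move=> hu hv he; apply/walkbP; exists [:: v]; rewrite /= hv he.
Qed.
End W.
Section S.
Variables (T : finType) (e : rel T) (e_sym : symmetric e).

Lemma walk0 (W : {set T}) x : x \in W -> walkb e W x x 0.
Proof. by move=> hx; apply/walkbP; exists [::]. Qed.

Lemma split1 (C D : {set T}) (CD_cover : C :|: D = [set: T]) p : forall x,
  path e x p -> exists z a q, [/\ a + size q <= size p,
    walkb e [set: T] x z a, path e z q, all (fun t => t \in D) q &
    [/\ last z q = last x p & (z = x \/ z \in C)]].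
Proof.
elim: p => [|y p IH] x /=.
  by move=> _; exists x, 0, [::]; split => //; [apply: walk0; rewrite inE | split => //; left].
move=> /andP [exy hp]; have [z [a [q [h1 h2 h3 h4 [h5 h6]]]]] := IH y hp.
have hzC : z \in C -> exists z0 a0 q0, [/\ a0 + size q0 <= (size p).+1,
    walkb e [set: T] x z0 a0, path e z0 q0, all (fun t => t \in D) q0 &
    [/\ last z0 q0 = last y p & (z0 = x \/ z0 \in C)]].
  move=> hz; exists z, (1 + a), q; split => //.
  - by apply: (walk_cat _ h2); apply: walk_edge; rewrite ?inE.
  - by split => //; right.
case: (boolP (z \in C)) => [/hzC //|hz].
case: h6 => [hzy|//]; subst z.
have hyD : y \in D.
  have : y \in C :|: D by rewrite CD_cover inE.
  by rewrite inE (negbTE hz).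
exists x, 0, (y :: q); split => //=.
- by rewrite ltnS; apply: leq_trans h1; apply: leq_addl.
- by apply: walk0; rewrite inE.
- by rewrite exy.
- by rewrite hyD.
- by split => //; left.
Qed.

Lemma split2 (Vi D : {set T}) (disj : Vi :&: D = set0) q : forall v,
  v \in Vi -> all (fun t => t \in Vi :|: D) q -> path e v q -> last v q \in D ->
  exists y w r, [/\ y \in Vi, e y w, w \in D & path e w r] /\ [/\
    all (fun t => t \in Vi :|: D) r, last w r = last v q & size r < size q].
Proof.
elim: q => [|y q IH] v /= hv.
  move=> _ _ hvD; have : v \in Vi :&: D by rewrite inE hv hvD.
  by rewrite disj inE.
move=> /andP [hy hall] /andP [evy hp] hl.
case: (boolP (y \in Vi)) => hyV.
  have [y' [w [r [[g1 g2 g3 g4] [g5 g6 g7]]]]] := IH y hyV hall hp hl.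
  by exists y', w, r; split; split => //; apply: ltnW.
have hyD : y \in D by move: hy; rewrite inE (negbTE hyV).
by exists v, y, q; split; split.
Qed.
End S.

Theorem lemma6p1 (T : finType) (e : rel T)
  (e_sym : symmetric e) (e_irr : irreflexive e)
  (C D : {set T})
  (CD_disj : C :&: D = set0) (CD_cover : C :|: D = [set: T])
  (c0 d0 : T) (c0C : c0 \in C) (d0D : d0 \in D)
  (k : nat) (V : 'I_k -> {set T})
  (V_disj : forall i j, i != j -> [disjoint V i & V j])
  (V_cover : \bigcup_(i < k) V i = C)
  (V_twin : forall i, forall u v, u \in V i -> v \in V i ->
       nbhd e u :&: D = nbhd e v :&: D) :
  dist e [set: T] c0 d0 =
  \big[omin/None]_(i < k)
     oadd (dist_set e [set: T] (V i) c0) (dist_set e (V i :|: D) (V i) d0).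
Proof.
have VC : forall i, V i \subset C by move=> i; rewrite -V_cover; apply: bigcup_sup.
have VD : forall i, V i :&: D = set0.
  move=> i; apply/setP => x; rewrite !inE.
  case hx: (x \in V i) => //=; case hd: (x \in D) => //.
  have : x \in C :&: D by rewrite inE (subsetP (VC i)) // hd.
  by rewrite CD_disj inE.
apply: oeq => n; rewrite le_n_big; apply/idP/idP.
- move/le_n_dist=> [m [hm /walkbP [p [h1 _ _ h4 h5]]]].
  have [z [a [q [g1 g2 g3 g4 [g5 g6]]]]] := split1 CD_cover h4.
  have hzC : z \in C by case: g6 => [->|].
  move: (hzC); rewrite -V_cover => /bigcupP [i _ hzi].
  apply/existsP; exists i => /=; apply/le_n_oadd; exists a, (size q); split.
  + rewrite /dist_set le_n_big; apply/existsP; exists z; rewrite hzi /=.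
    by apply/le_n_dist; exists a; split => //; apply: walk_rev.
  + rewrite /dist_set le_n_big; apply/existsP; exists z; rewrite hzi /=.
    apply/le_n_dist; exists (size q); split => //; apply/walkbP; exists q; split => //.
    * by rewrite inE hzi.
    * by apply: sub_all g4 => t ht; rewrite inE ht orbT.
    * by rewrite g5 h5.
  + by apply: leq_trans g1 _; rewrite h1.
- move/existsP=> [i /= /le_n_oadd [x [y [h1 h2 h3]]]].
  move: h1; rewrite /dist_set le_n_big => /existsP [u /andP [hu /le_n_dist [a [ha hwa]]]].
  move: h2; rewrite le_n_big => /existsP [v /andP [hv /le_n_dist [b [hb hwb]]]].
  move/walkbP: hwb => [q [g1 g2 g3 g4 g5]].
  have [y' [w [r [[f1 f2 f3 f4] [f5 f6 f7]]]]] := split2 (VD i) hv g3 g4 (eq_ind_r (fun t => t \in D) d0D g5).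
  have euw : e u w.
    have : w \in nbhd e y' :&: D by rewrite !inE f2 f3.
    by rewrite (V_twin i y' u f1 hu) !inE => /andP [].
  apply/le_n_dist; exists (a + (1 + size r)); split.
  + apply: leq_trans h3; apply: leq_add; first exact: leq_trans ha _.
    by rewrite add1n; apply: leq_trans hb; rewrite -g1.
  + apply: (walk_cat (walk_rev e_sym hwa)).
    apply: (walk_cat (v := w)); first by apply: walk_edge; rewrite ?inE.
    apply/walkbP; exists r; split => //.
      by apply/allP => t _; rewrite inE.
    by rewrite f6 g5.
Qed.
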